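(* Consider optimal control problem OCP-1 (described in the context), let $u_*^1$ be an optimal control with optimal trajectory $(s_*^1,e_*^1,i_*^1,j_*^1)$ and let $\psi_*=(\psi_1^*,\dots,\psi_4^* )$ be the corresponding adjoint function from the Pontryagin maximum principle. Then at every $t\in[0,T]$ at which $u_*^1(t)$ maximizes the Hamiltonian $H(s_*^1(t),e_*^1(t),i_*^1(t),j_*^1(t),\psi_*(t),u)$ over $u\in[0,u_{\max}]$: if $A_*(t)>0$, then $u_*^1(t)=u_{\max}$ when $\lambda_*^1(t)>u_{\max}$, $u_*^1(t)=\lambda_*^1(t)$ when $0\le\lambda_*^1(t)\le u_{\max}$, and $u_*^1(t)=0$ when $\lambda_*^1(t)\le 0$; and if $A_*(t)\le0$, then $u_*^1(t)=0$.
   Context: Parameters: $\beta_1,\beta_2,\gamma,\rho_1,\rho_2>0$; $\sigma_1,\sigma_2>0$ with $\sigma_1+\sigma_2=1$; $0\le u_{\max}<1$; weights $\alpha_1,\alpha_2\ge0$, $\alpha_3>0$; horizon $T>0$; initial values $s_0,e_0,i_0,j_0>0$ with $s_0+e_0+i_0+j_0\le 1$. The admissible controls are all Lebesgue measurable $u:[0,T]\to[0,u_{\max}]$. The state system is $s'=-s(\beta_1(1-u)^2i+\beta_2(1-u)j)$, $e'=s(\beta_1(1-u)^2i+\beta_2(1-u)j)-\gamma e$, $i'=\sigma_1\gamma e-\rho_1 i$, $j'=\sigma_2\gamma e-\rho_2 j$, with $s(0)=s_0,e(0)=e_0,i(0)=i_0,j(0)=j_0$. OCP-1 is the problem of minimizing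 $Q(u)=\alpha_1(e(T)+i(T)+j(T))+\alpha_2\int_0^T(e+i+j)\,dt+0.5\alpha_3\int_0^Tu^2\,dt$ over admissible controls. Its Hamiltonian is $H(s,e,i,j,\psi_1,\dots,\psi_4,u)=-s(\beta_1(1-u)^2i+\beta_2(1-u)j)(\psi_1-\psi_2)-\gamma e(\psi_2-\sigma_1\psi_3-\sigma_2\psi_4)-\rho_1 i\psi_3-\rho_2 j\psi_4-\alpha_2(e+i+j)-0.5\alpha_3u^2$. The adjoint function $\psi_*$ is a nontrivial solution of $\psi_1'=(\beta_1(1-u_*^1)^2i_*^1+\beta_2(1-u_*^1)j_*^1)(\psi_1-\psi_2)$, $\psi_2'=\gamma(\psi_2-\sigma_1\psi_3-\sigma_2\psi_4)+\alpha_2$, $\psi_3'=\beta_1(1-u_*^1)^2s_*^1(\psi_1-\psi_2)+\rho_1\psi_3+\alpha_2$, $\psi_4'=\beta_2(1-u_*^1)s_*^1(\psi_1-\psi_2)+\rho_2\psi_4+\alpha_2$, with $\psi_1(T)=0$, $\psi_2(T)=\psi_3(T)=\psi_4(T)=-\alpha_1$, and $u_*^1(t)$ maximizes the Hamiltonian along the optimal trajectory for almost all $t\in[0,T]$. Define $A_*(t)=\beta_1s_*^1(t)i_*^1(t)(\psi_1^*(t)-\psi_2^*(t))+0.5\alpha_3$, $B_*(t)=s_*^1(t)(2\beta_1i_*^1(t)+\beta_2j_*^1(t))(\psi_1^*(t)-\psi_2^*(t))$, and, whenever $A_*(t)\neq0$, the indicator function $\lambda_*^1(t)=0.5B_*(t)/A_*(t)$.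 *)

(* Defs.v *)
From HB Require Import structures.
From mathcomp Require Import all_boot all_order all_algebra.
From mathcomp Require Import all_classical all_reals all_analysis.
Set Implicit Arguments. Unset Strict Implicit. Unset Printing Implicit Defensive.
Import Order.TTheory GRing.Theory Num.Theory.
Local Open Scope classical_set_scope.
Local Open Scope ring_scope.

Section OCP.
Variable R : realType.
Local Notation mu := (@lebesgue_measure R).

(* x is a Caratheodory (absolutely continuous, integral-form) solution on [0,T]
   of x' = f with x(0) = x0. *)
Definition fwd_sol (T x0 : R) (x f : R -> R) : Prop :=
  mu.-integrable `[0, T] (EFin \o f) /\
  forall t, 0 <= t <= T ->
    (x t)%:E = (x0%:E + \int[mu]_(r in `[0%R, t]%classic) (f r)%:E)%E.

Definition bwd_sol (T xT : R) (x f : R -> R) : Prop :=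
  mu.-integrable `[0, T] (EFin \o f) /\
  forall t, 0 <= t <= T ->
    (x t)%:E = (xT%:E - \int[mu]_(r in `[t, T]%classic) (f r)%:E)%E.

Definition admissible (T umax : R) (u : R -> R) : Prop :=
  measurable_fun `[0, T] u /\ forall t, 0 <= t <= T -> 0 <= u t <= umax.

Definition incid (b1 b2 : R) (u s i j : R -> R) (t : R) : R :=
  s t * (b1 * (1 - u t) ^+ 2 * i t + b2 * (1 - u t) * j t).

Definition state_sol (b1 b2 g r1 r2 sg1 sg2 T s0 e0 i0 j0 : R)
    (u s e i j : R -> R) : Prop :=
  [/\ fwd_sol T s0 s (fun t => - incid b1 b2 u s i j t),
      fwd_sol T e0 e (fun t => incid b1 b2 u s i j t - g * e t),
      fwd_sol T i0 i (fun t => sg1 * g * e t - r1 * i t) &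
      fwd_sol T j0 j (fun t => sg2 * g * e t - r2 * j t)].

Definition Qcost (a1 a2 a3 T : R) (u e i j : R -> R) : \bar R :=
  ((a1 * (e T + i T + j T))%:E
   + a2%:E * \int[mu]_(t in `[0%R, T]%classic) (e t + i t + j t)%:E
   + (2^-1 * a3)%:E * \int[mu]_(t in `[0%R, T]%classic) (u t ^+ 2)%:E)%E.

Definition Ham (b1 b2 g r1 r2 sg1 sg2 a2 a3 : R)
    (s e i j p1 p2 p3 p4 u : R) : R :=
  - s * (b1 * (1 - u) ^+ 2 * i + b2 * (1 - u) * j) * (p1 - p2)
  - g * e * (p2 - sg1 * p3 - sg2 * p4) - r1 * i * p3 - r2 * j * p4
  - a2 * (e + i + j) - 2^-1 * a3 * u ^+ 2.

Definition adjoint_sol (b1 b2 g r1 r2 sg1 sg2 a1 a2 T : R)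
    (u s i j p1 p2 p3 p4 : R -> R) : Prop :=
  [/\ bwd_sol T 0 p1 (fun t =>
        (b1 * (1 - u t) ^+ 2 * i t + b2 * (1 - u t) * j t) * (p1 t - p2 t)),
      bwd_sol T (- a1) p2 (fun t =>
        g * (p2 t - sg1 * p3 t - sg2 * p4 t) + a2),
      bwd_sol T (- a1) p3 (fun t =>
        b1 * (1 - u t) ^+ 2 * s t * (p1 t - p2 t) + r1 * p3 t + a2) &
      bwd_sol T (- a1) p4 (fun t =>
        b2 * (1 - u t) * s t * (p1 t - p2 t) + r2 * p4 t + a2)].

Definition maximizes_H (b1 b2 g r1 r2 sg1 sg2 a2 a3 umax : R)
    (s e i j p1 p2 p3 p4 v : R) : Prop :=
  0 <= v <= umax /\
  forall w, 0 <= w <= umax ->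
    Ham b1 b2 g r1 r2 sg1 sg2 a2 a3 s e i j p1 p2 p3 p4 w
    <= Ham b1 b2 g r1 r2 sg1 sg2 a2 a3 s e i j p1 p2 p3 p4 v.

Definition Astar (b1 a3 s i p1 p2 : R) : R := b1 * s * i * (p1 - p2) + 2^-1 * a3.
Definition Bstar (b1 b2 s i j p1 p2 : R) : R :=
  s * (2 * b1 * i + b2 * j) * (p1 - p2).
(* indicator function lambda (meaningful when A <> 0) *)
Definition lambda_star (b1 b2 a3 s i j p1 p2 : R) : R :=
  2^-1 * Bstar b1 b2 s i j p1 p2 / Astar b1 a3 s i p1 p2.

End OCP.

(* Main.v *)
Require Import Defs.
From HB Require Import structures.
From mathcomp Require Import all_boot all_order all_algebra.
From mathcomp Require Import all_classical all_reals all_analysis.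
Import Order.TTheory GRing.Theory Num.Theory.
Local Open Scope classical_set_scope.
Local Open Scope ring_scope.
From mathcomp Require Import ring lra.
Import numFieldNormedType.Exports.

Section H.
Variable R : realType.
Local Notation mu := (@lebesgue_measure R).

Lemma subcc (a b a' b' : R) : a <= a' -> b' <= b ->
  `[a', b'] `<=` `[a, b].
Proof.
move=> aa bb z /=; rewrite !in_itv /= => /andP[h1 h2].
by rewrite (le_trans aa h1) (le_trans h2 bb).
Qed.

Lemma suboc (a b a' b' : R) : a <= a' -> b' <= b ->
  `]a', b'] `<=` `[a, b].
Proof.
move=> aa bb z /=; rewrite !in_itv /= => /andP[h1 h2].
by rewrite (le_trans aa (ltW h1)) (le_trans h2 bb).
Qed.

Lemma fwd_val (T x0 : R) (x f : R -> R) : fwd_sol T x0 x f ->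
  forall t, 0 <= t <= T -> x t = x0 + \int[mu]_(r in `[0, t]) f r.
Proof.
case=> intf h t /andP[t0 tT].
have := h t; rewrite t0 tT => /(_ isT).
have it : mu.-integrable `[0, t] (EFin \o f).
  by apply: integrableS intf => //; apply: subcc.
have fin : (\int[mu]_(r in `[0%R, t]%classic) (f r)%:E)%E \is a fin_num.
  by apply: integrable_fin_num.
rewrite /Rintegral; move: fin => /fineK <- /=.
by rewrite -EFinD => -[].
Qed.

Lemma fwd_inc (T x0 : R) (x f : R -> R) : fwd_sol T x0 x f ->
  forall a b c, 0 <= a -> a <= b -> b <= T ->
  (forall r, a <= r <= b -> c <= f r) -> c * (b - a) <= x b - x a.
Proof.
move=> hs a b c a0 ab bT hc.
have intf := hs.1.
rewrite (@fwd_val _ _ _ _ hs) ?a0 ?(le_trans ab bT) //.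
rewrite (@fwd_val _ _ _ _ hs) ?(le_trans a0 ab) ?bT //.
rewrite opprD addrA (addrC x0) addrK.
have ib : mu.-integrable `[0, b] (EFin \o f).
  by apply: integrableS intf => //; apply: subcc.
rewrite (@Rintegral_itvB _ f (BLeft 0) (BRight b) a) ?bnd_simp //.
have iab : mu.-integrable `]a, b] (EFin \o f).
  by apply: integrableS ib => //; apply: suboc.
have ic : mu.-integrable `]a, b] (EFin \o cst c).
  have : mu.-integrable `[a, b] (EFin \o cst c).
    apply: continuous_compact_integrable; first exact: segment_compact.
    by apply: continuous_subspaceT => ?; exact: cst_continuous.
  by apply: integrableS => //; apply: suboc.
apply: le_trans (le_Rintegral _ ic iab _) => //.
  rewrite Rintegral_cst //.
  have hm : mu `]a, b] = (b - a)%:E.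
    rewrite lebesgue_measure_itv /= lte_fin.
    case: ltP => ab' //=.
    have -> : b = a by apply/eqP; rewrite eq_le ab ab'.
    by rewrite subrr.
  by move: hm => /= ->.
move=> r /=; rewrite in_itv /= => /andP[ar rb]; apply: hc.
  by rewrite (ltW ar) rb.
  by rewrite a0 (le_trans ab bT).
by rewrite (le_trans a0 ab) bT.
Qed.


Lemma small_le0 (y C : R) : (forall n : nat, y <= C / 2 ^+ n) -> y <= 0.
Proof.
move=> hn; rewrite leNgt; apply/negP => y0.
have C0 : 0 <= C by have := hn 0%N; rewrite expr0 divr1 => /(le_trans (ltW y0)).
have := archi_boundP (divr_ge0 C0 (ltW y0)).
set n := Num.bound _ => hb.
have := hn n.
have h2 : (n%:R : R) < 2 ^+ n.
  by rewrite -natrX ltr_nat ltn_expl.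
have p2 : (0 : R) < 2 ^+ n by rewrite exprn_gt0.
rewrite ler_pdivlMr // => hy.
have h3 : C < y * n%:R.
  have : y * (C / y) < y * n%:R by rewrite ltr_pM2l.
  by rewrite mulrC divfK // gt_eqF.
have h4 : y * n%:R < y * 2 ^+ n by rewrite ltr_pM2l.
have := lt_le_trans (lt_trans h3 h4) hy.
by rewrite ltxx.
Qed.

Lemma local_zero (T x0 : R) (x f : R -> R) (hs : fwd_sol T x0 x f)
  (tau K C : R) : 0 < tau -> tau <= T -> 0 < K -> x tau = 0 ->
  (forall r, 0 <= r <= tau -> 0 <= x r <= C) ->
  (forall r, 0 <= r <= tau -> - K * x r <= f r) ->
  forall r, Num.max 0 (tau - (2 * K)^-1) <= r <= tau -> x r <= 0.
Proof.
move=> t0 tT K0 xt hb hf.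
set a0 := Num.max 0 (tau - (2 * K)^-1).
have a00 : 0 <= a0 by rewrite le_max lexx.
have a01 : tau - (2 * K)^-1 <= a0 by rewrite le_max lexx orbT.
have C0 : 0 <= C by have := hb tau; rewrite (ltW t0) lexx xt => /(_ isT) /andP[].
suff H : forall n : nat, forall r, a0 <= r <= tau -> x r <= C / 2 ^+ n.
  by move=> r hr; apply: (@small_le0 _ C) => n; exact: H.
elim=> [|n IH] r /andP[ar rt].
  rewrite expr0 divr1.
  have : 0 <= r <= tau by rewrite (le_trans a00 ar) rt.
  by move/hb => /andP[].
set B := C / 2 ^+ n.
have B0 : 0 <= B by rewrite divr_ge0 // exprn_ge0.
have := @fwd_inc _ _ _ _ hs r tau (- K * B) (le_trans a00 ar) rt tT.
have hq : forall q, r <= q <= tau -> - K * B <= f q.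
  move=> q /andP[rq qt].
  have q0 : 0 <= q <= tau by rewrite (le_trans a00 (le_trans ar rq)) qt.
  apply: le_trans (hf q q0).
  rewrite !mulNr lerN2 ler_pM2l //.
  by apply: IH; rewrite (le_trans ar rq) qt.
move/(_ hq); rewrite xt sub0r => h.
have hd : tau - r <= (2 * K)^-1 by lra.
have : x r <= K * B * (2 * K)^-1.
  apply: (le_trans (y := K * B * (tau - r))).
    by move: h; lra.
  by rewrite ler_wpM2l // mulr_ge0 // ltW.
suff -> : K * B * (2 * K)^-1 = C / 2 ^+ n.+1 by [].
rewrite /B exprS; field.
by rewrite (gt_eqF K0) /= expf_neq0.
Qed.

Lemma cont_gt (h : R -> R) (a b tau c : R) :
  {within `[a, b], continuous h} -> a <= tau <= b -> c < h tau ->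
  exists2 d, 0 < d & forall r, a <= r <= b -> `|r - tau| < d -> c < h r.
Proof.
move=> hc ht ct.
have At : `[a, b]%classic tau by rewrite /= in_itv /=.
have := hc tau => /cvgr_gt /(_ c ct).
move=> H.
have : within `[a, b]%classic (nbhs tau) (fun t => c < h t).
  by rewrite (nbhs_subspace_in At); exact: H.
rewrite /within /= => /nbhs_ballP [d /= d0 hd].
exists d => // r rab rt; apply: (hd r).
  by rewrite /ball /= distrC.
by rewrite /= in_itv /=.
Qed.

Lemma cont_lt (h : R -> R) (a b tau c : R) :
  {within `[a, b], continuous h} -> a <= tau <= b -> h tau < c ->
  exists2 d, 0 < d & forall r, a <= r <= b -> `|r - tau| < d -> h r < c.
Proof.
move=> hc ht ct.
have At : `[a, b]%classic tau by rewrite /= in_itv /=.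
have := hc tau => /cvgr_lt /(_ c ct).
move=> H.
have : within `[a, b]%classic (nbhs tau) (fun t => h t < c).
  by rewrite (nbhs_subspace_in At); exact: H.
rewrite /within /= => /nbhs_ballP [d /= d0 hd].
exists d => // r rab rt; apply: (hd r).
  by rewrite /ball /= distrC.
by rewrite /= in_itv /=.
Qed.

Lemma fwd_gt (T x0 : R) (x f : R -> R) (hs : fwd_sol T x0 x f) (tau c : R) :
  0 <= T -> 0 <= tau <= T -> c < x tau ->
  exists2 d, 0 < d & forall r, 0 <= r <= T -> `|r - tau| < d -> c < x r.
Proof.
move=> T0 ht ct.
have hc := parameterized_integral_continuous T0 hs.1.
have [|d d0 hd] := @cont_gt _ _ _ _ (c - x0) hc ht.
  by move: ct; rewrite (@fwd_val _ _ _ _ hs _ ht) /parameterized_integral; lra.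
exists d => // r hr hrt; have := hd r hr hrt.
by rewrite (@fwd_val _ _ _ _ hs _ hr) /parameterized_integral; lra.
Qed.

Lemma fwd_lt (T x0 : R) (x f : R -> R) (hs : fwd_sol T x0 x f) (tau c : R) :
  0 <= T -> 0 <= tau <= T -> x tau < c ->
  exists2 d, 0 < d & forall r, 0 <= r <= T -> `|r - tau| < d -> x r < c.
Proof.
move=> T0 ht ct.
have hc := parameterized_integral_continuous T0 hs.1.
have [|d d0 hd] := @cont_lt _ _ _ _ (c - x0) hc ht.
  by move: ct; rewrite (@fwd_val _ _ _ _ hs _ ht) /parameterized_integral; lra.
exists d => // r hr hrt; have := hd r hr hrt.
by rewrite (@fwd_val _ _ _ _ hs _ hr) /parameterized_integral; lra.
Qed.

Lemma fwd_ub (T x0 : R) (x f : R -> R) (hs : fwd_sol T x0 x f) :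
  0 <= T -> exists C, forall r, 0 <= r <= T -> x r <= C.
Proof.
move=> T0.
have hc := parameterized_integral_continuous T0 hs.1.
have [c _ hm] := EVT_max T0 hc.
exists (x0 + parameterized_integral lebesgue_measure 0 c f) => r hr.
rewrite (@fwd_val _ _ _ _ hs _ hr) lerD2l; apply: hm.
by rewrite in_itv /=.
Qed.

Lemma fwd_0 (T x0 : R) (x f : R -> R) (hs : fwd_sol T x0 x f) :
  0 <= T -> x 0 = x0.
Proof.
move=> T0; rewrite (@fwd_val _ _ _ _ hs 0) ?lexx ?T0 //.
by rewrite set_itv1 Rintegral_set1 addr0.
Qed.


Lemma exit_contra (T x0 : R) (x f : R -> R) (hs : fwd_sol T x0 x f)
  (tau K C : R) : 0 < tau -> tau <= T -> 0 < K -> x tau <= 0 ->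
  (forall r, 0 <= r <= tau -> 0 <= x r) ->
  (forall r, 0 <= r <= T -> x r <= C) ->
  (forall r, 0 <= r <= tau -> - K * x r <= f r) ->
  (forall r, 0 <= r < tau -> 0 < x r) -> False.
Proof.
move=> t0 tT K0 xt0 hp hC hf hpos.
have xt : x tau = 0.
  by apply/eqP; rewrite eq_le xt0 hp // (ltW t0) lexx.
set a0 := Num.max 0 (tau - (2 * K)^-1).
have a00 : 0 <= a0 by rewrite le_max lexx.
have a0t : a0 < tau.
  rewrite gt_max t0 /= ltrBlDr ltrDl invr_gt0 mulr_gt0 //.
have hb : forall r, 0 <= r <= tau -> 0 <= x r <= C.
  move=> r hr; rewrite hp // hC //.
  by move: hr => /andP[-> rt]; rewrite (le_trans rt tT).
have := @local_zero _ _ _ _ hs tau K C t0 tT K0 xt hb hf a0.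
rewrite lexx (ltW a0t) => /(_ isT).
have := hpos a0; rewrite a00 a0t => /(_ isT) h1 h2.
by have := lt_le_trans h1 h2; rewrite ltxx.
Qed.


Lemma state_pos (b1 b2 g r1 r2 sg1 sg2 T s0 e0 i0 j0 umax : R)
  (u s e i j : R -> R) :
  0 < b1 -> 0 < b2 -> 0 < g -> 0 < r1 -> 0 < r2 -> 0 < sg1 -> 0 < sg2 ->
  umax < 1 -> 0 < T -> 0 < s0 -> 0 < e0 -> 0 < i0 -> 0 < j0 ->
  admissible T umax u ->
  state_sol b1 b2 g r1 r2 sg1 sg2 T s0 e0 i0 j0 u s e i j ->
  forall t, 0 <= t <= T -> 0 < s t /\ 0 < e t /\ 0 < i t /\ 0 < j t.
Proof.
move=> hb1 hb2 hg hr1 hr2 hsg1 hsg2 hum hT hs0 he0 hi0 hj0 [_ hu]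
  [hs he hi hj] t ht.
have T0 : 0 <= T := ltW hT.
have [Cs hCs] := (@fwd_ub _ _ _ _ hs) T0.
have [Ce hCe] := (@fwd_ub _ _ _ _ he) T0.
have [Ci hCi] := (@fwd_ub _ _ _ _ hi) T0.
have [Cj hCj] := (@fwd_ub _ _ _ _ hj) T0.
have h0T : (0:R) <= 0 <= T by rewrite lexx T0.
have Ci0 : 0 <= Ci by have := hCi 0 h0T; rewrite ((@fwd_0 _ _ _ _ hi) T0) => /(le_trans (ltW hi0)).
have Cj0 : 0 <= Cj by have := hCj 0 h0T; rewrite ((@fwd_0 _ _ _ _ hj) T0) => /(le_trans (ltW hj0)).
pose P r := 0 < s r /\ 0 < e r /\ 0 < i r /\ 0 < j r.
have [//|nPt] := pselect (P t).
exfalso.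
pose Z := [set r | 0 <= r <= T /\ ~ P r].
have Zt : Z t by split.
have lbZ : lbound Z 0 by move=> r [/andP[]].
have hZ : has_inf Z by split; [exists t | exists 0].
pose tau := inf Z.
have t0 : 0 <= tau by apply: lb_le_inf => //; exists t.
have tT : tau <= T.
  apply: le_trans (ge_inf hZ.2 Zt) _; by case/andP: ht.
have before : forall r, 0 <= r < tau -> P r.
  move=> r /andP[r0 rt]; have [//|nPr] := pselect (P r).
  have Zr : Z r by split => //; rewrite r0 (le_trans (ltW rt) tT).
  by have := ge_inf hZ.2 Zr; rewrite leNgt rt.
have htau : 0 <= tau <= T by rewrite t0 tT.
have atau : ~ P tau.
  move=> [ps [pe [pi pj]]].
  have [d1 d10 hd1] := (@fwd_gt _ _ _ _ hs _ _) T0 htau ps.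
  have [d2 d20 hd2] := (@fwd_gt _ _ _ _ he _ _) T0 htau pe.
  have [d3 d30 hd3] := (@fwd_gt _ _ _ _ hi _ _) T0 htau pi.
  have [d4 d40 hd4] := (@fwd_gt _ _ _ _ hj _ _) T0 htau pj.
  pose d := Num.min (Num.min d1 d2) (Num.min d3 d4).
  have d0 : 0 < d by rewrite !lt_min d10 d20 d30 d40.
  have [z [hz nPz] zt] := inf_adherent d0 hZ.
  have tz : tau <= z := ge_inf hZ.2 (conj hz nPz).
  have dz : `|z - tau| < d by rewrite ger0_norm ?subr_ge0 // ltrBlDl.
  move: dz; rewrite !lt_min => /andP[/andP[z1 z2] /andP[z3 z4]].
  by apply: nPz; split; [apply: hd1|split; [apply: hd2|split; [apply: hd3|apply: hd4]]].
have tpos : 0 < tau.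
  rewrite lt_neqAle t0 andbT; apply/eqP => t0'.
  apply: atau; rewrite -t0' /P ((@fwd_0 _ _ _ _ hs) T0) ((@fwd_0 _ _ _ _ he) T0) ((@fwd_0 _ _ _ _ hi) T0) ((@fwd_0 _ _ _ _ hj) T0).
  by [].
have nn : forall (x f : R -> R) x0, fwd_sol T x0 x f ->
    (forall r, 0 <= r < tau -> 0 < x r) -> 0 <= x tau.
  move=> x f x0 hx hp; rewrite leNgt; apply/negP => xt.
  have [d d0 hd] := (@fwd_lt _ _ _ _ hx _ _) T0 htau xt.
  pose r := Num.max 0 (tau - d / 2).
  have r0 : 0 <= r by rewrite le_max lexx.
  have rt : r < tau by rewrite gt_max tpos /= ltrBlDr ltrDl divr_gt0.
  have rd : `|r - tau| < d.
    rewrite ler0_norm ?subr_le0 ?(ltW rt) // opprB.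
    have : tau - d / 2 <= r by rewrite le_max lexx orbT.
    lra.
  have := hd r _ rd; rewrite r0 (le_trans (ltW rt) tT) => /(_ isT).
  have := hp r; rewrite r0 rt => /(_ isT) h1 h2.
  by have := lt_trans h1 h2; rewrite ltxx.
have nns : 0 <= s tau by apply: (nn _ _ _ hs) => r /before [].
have nne : 0 <= e tau by apply: (nn _ _ _ he) => r /before [_ []].
have nni : 0 <= i tau by apply: (nn _ _ _ hi) => r /before [_ [_ []]].
have nnj : 0 <= j tau by apply: (nn _ _ _ hj) => r /before [_ [_ [_]]].
have allnn : forall r, 0 <= r <= tau ->
    [/\ 0 <= s r, 0 <= e r, 0 <= i r, 0 <= j r & 0 <= u r <= umax].
  move=> r /andP[r0 rt].
  have hur : 0 <= u r <= umax by apply: hu; rewrite r0 (le_trans rt tT).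
  move: rt; rewrite le_eqVlt => /orP[/eqP rt|rt].
    by rewrite rt; rewrite rt in hur; split.
  have : 0 <= r < tau by rewrite r0 rt.
  move=> /before [? [? [? ?]]].
  by split => //; apply: ltW.
pose K := b1 * Ci + b2 * Cj + g + r1 + r2 + 1.
have K0 : 0 < K.
  rewrite /K; have := mulr_ge0 (ltW hb1) Ci0; have := mulr_ge0 (ltW hb2) Cj0.
  lra.
have hbef : forall (x : R -> R), (forall r, 0 <= r < tau -> P r -> 0 < x r) ->
    forall r, 0 <= r < tau -> 0 < x r.
  by move=> x hx r hr; apply: hx => //; apply: before.
have rT : forall r, 0 <= r <= tau -> 0 <= r <= T.
  by move=> r /andP[r0 rt]; rewrite r0 (le_trans rt tT).
have [st0|st0] := leP (s tau) 0.
  apply: (@exit_contra _ _ _ _ hs _ _ _ tpos tT K0 st0 _ hCs).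
  - by move=> r /allnn [].
  - move=> r hr; have [sr er ir jr /andP[u0 u1]] := allnn r hr.
    have ir' : i r <= Ci by apply: hCi; exact: rT.
    have jr' : j r <= Cj by apply: hCj; exact: rT.
    rewrite /incid mulNr lerN2.
    have h1 : (1 - u r) ^+ 2 <= 1.
      rewrite expr_le1 //; lra.
    have h1' : 0 <= (1 - u r) ^+ 2 by apply: sqr_ge0.
    have h2 : b1 * (1 - u r) ^+ 2 * i r <= b1 * Ci.
      rewrite -mulrA ler_pM2l //.
      apply: (le_trans (y := 1 * i r)); last by rewrite mul1r.
      by rewrite ler_wpM2r.
    have h3 : b2 * (1 - u r) * j r <= b2 * Cj.
      rewrite -mulrA ler_pM2l //.
      apply: (le_trans (y := 1 * j r)); last by rewrite mul1r.
      rewrite ler_wpM2r //; lra.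
    rewrite mulrC ler_wpM2r //; rewrite /K; lra.
  - by move=> r /before [].
have [et0|et0] := leP (e tau) 0.
  apply: (@exit_contra _ _ _ _ he _ _ _ tpos tT K0 et0 _ hCe).
  - by move=> r /allnn [].
  - move=> r hr; have [sr er ir jr /andP[u0 u1]] := allnn r hr.
    have hinc : 0 <= incid b1 b2 u s i j r.
      have u1' : 0 <= 1 - u r by lra.
      by rewrite /incid mulr_ge0 // addr_ge0 // !mulr_ge0 // ?sqr_ge0 // ltW.
    have : g * e r <= K * e r by rewrite ler_wpM2r // /K;
      have := mulr_ge0 (ltW hb1) Ci0; have := mulr_ge0 (ltW hb2) Cj0; lra.
    lra.
  - by move=> r /before [_ []].
have [it0|it0] := leP (i tau) 0.
  apply: (@exit_contra _ _ _ _ hi _ _ _ tpos tT K0 it0 _ hCi).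
  - by move=> r /allnn [].
  - move=> r hr; have [sr er ir jr /andP[u0 u1]] := allnn r hr.
    have : 0 <= sg1 * g * e r by rewrite !mulr_ge0 // ltW.
    have : r1 * i r <= K * i r by rewrite ler_wpM2r // /K;
      have := mulr_ge0 (ltW hb1) Ci0; have := mulr_ge0 (ltW hb2) Cj0; lra.
    lra.
  - by move=> r /before [_ [_ []]].
have [jt0|jt0] := leP (j tau) 0.
  apply: (@exit_contra _ _ _ _ hj _ _ _ tpos tT K0 jt0 _ hCj).
  - by move=> r /allnn [].
  - move=> r hr; have [sr er ir jr /andP[u0 u1]] := allnn r hr.
    have : 0 <= sg2 * g * e r by rewrite !mulr_ge0 // ltW.
    have : r2 * j r <= K * j r by rewrite ler_wpM2r // /K;
      have := mulr_ge0 (ltW hb1) Ci0; have := mulr_ge0 (ltW hb2) Cj0; lra.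
    lra.
  - by move=> r /before [_ [_ [_]]].
by apply: atau.
Qed.


Lemma sq0 (x : R) : x ^+ 2 <= 0 -> x = 0.
Proof.
move=> h; apply/eqP; rewrite -sqrf_eq0 eq_le h /=; exact: sqr_ge0.
Qed.

Lemma ham_diff (b1 b2 g r1 r2 sg1 sg2 a2 a3 S E I J p1 p2 p3 p4 w v : R) :
  Ham b1 b2 g r1 r2 sg1 sg2 a2 a3 S E I J p1 p2 p3 p4 w -
  Ham b1 b2 g r1 r2 sg1 sg2 a2 a3 S E I J p1 p2 p3 p4 v =
  Bstar b1 b2 S I J p1 p2 * (w - v) - Astar b1 a3 S I p1 p2 * (w ^+ 2 - v ^+ 2).
Proof. rewrite /Ham /Bstar /Astar; ring. Qed.

Lemma ctrl_cases (b1 b2 g r1 r2 sg1 sg2 a2 a3 umax S E I J p1 p2 p3 p4 v : R) :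
  0 < b1 -> 0 < b2 -> 0 < a3 -> umax < 1 -> 0 < S -> 0 < I -> 0 < J ->
  maximizes_H b1 b2 g r1 r2 sg1 sg2 a2 a3 umax S E I J p1 p2 p3 p4 v ->
  let A := Astar b1 a3 S I p1 p2 in
  let lam := lambda_star b1 b2 a3 S I J p1 p2 in
  (0 < A ->
     [/\ umax < lam -> v = umax,
         0 <= lam <= umax -> v = lam &
         lam <= 0 -> v = 0])
  /\ (A <= 0 -> v = 0).
Proof.
move=> hb1 hb2 ha3 hum hS hI hJ [/andP[v0 vu] hm] A lam.
have hd : forall w, 0 <= w <= umax ->
    Bstar b1 b2 S I J p1 p2 * (w - v) - A * (w ^+ 2 - v ^+ 2) <= 0.
  move=> w hw; rewrite /A -(ham_diff b1 b2 g r1 r2 sg1 sg2 a2 a3 S E I J p1 p2 p3 p4) subr_le0; exact: hm.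
split.
  move=> A0.
  have hB : Bstar b1 b2 S I J p1 p2 = 2 * A * lam.
    rewrite /lam /lambda_star -/A; field; exact: lt0r_neq0.
  have hd' : forall w, 0 <= w <= umax -> A * ((w - v) * (2 * lam - w - v)) <= 0.
    move=> w hw; have := hd w hw; rewrite hB.
    suff -> : 2 * A * lam * (w - v) - A * (w ^+ 2 - v ^+ 2) =
      A * ((w - v) * (2 * lam - w - v)) by [].
    ring.
  split.
  - move=> hl; have := hd' umax; rewrite lexx (le_trans v0 vu) => /(_ isT).
    rewrite pmulr_rle0 // => h.
    apply/eqP; rewrite eq_le vu /=; rewrite leNgt; apply/negP => vlt.
    have : 0 < (umax - v) * (2 * lam - umax - v).
      by apply: mulr_gt0; lra.
    by rewrite ltNge h.
  - move=> /andP[l0 lu]; have := hd' lam; rewrite l0 lu => /(_ isT).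
    rewrite pmulr_rle0 // => h.
    have : (lam - v) ^+ 2 <= 0.
      suff -> : (lam - v) ^+ 2 = (lam - v) * (2 * lam - lam - v) by [].
      ring.
    by move/sq0/eqP; rewrite subr_eq0 => /eqP.
  - move=> l0; have := hd' 0; rewrite lexx (le_trans v0 vu) => /(_ isT).
    rewrite pmulr_rle0 // => h.
    have : v ^+ 2 <= 0 by nra.
    by move/sq0.
move=> A0.
pose D := p1 - p2.
pose X := b1 * S * I * D.
pose Y := b2 * S * J * D.
have hA : A = X + 2^-1 * a3 by rewrite /A /Astar.
have hB : Bstar b1 b2 S I J p1 p2 = 2 * X + Y.
  by rewrite /Bstar /X /Y /D; ring.
have X0 : X < 0.
  have : 0 < 2^-1 * a3 by rewrite mulr_gt0 // invr_gt0.
  lra.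
have D0 : D < 0.
  move: X0; rewrite /X pmulr_rlt0 //.
  by rewrite !mulr_gt0.
have Y0 : Y <= 0.
  rewrite /Y; apply: mulr_ge0_le0 (ltW D0).
  by rewrite !mulr_ge0 // ltW.
apply/eqP; rewrite eq_le v0 andbT; rewrite leNgt; apply/negP => vpos.
have := hd 0; rewrite lexx (le_trans v0 vu) => /(_ isT).
rewrite hB hA => h.
have hx : X * (2 - v) < 0 by rewrite pmulr_llt0 //; lra.
have ha : 0 <= 2^-1 * a3 by rewrite mulr_ge0 // ?invr_ge0 // ltW.
have : v * (X * (2 - v) + Y - 2^-1 * a3 * v) < 0.
  have : 0 <= 2^-1 * a3 * v by rewrite mulr_ge0 // ltW.
  by rewrite pmulr_rlt0 //; lra.
have -> : v * (X * (2 - v) + Y - 2^-1 * a3 * v) =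
   - ((2 * X + Y) * (0 - v) - (X + 2^-1 * a3) * (0 ^+ 2 - v ^+ 2)) by ring.
lra.
Qed.

End H.

Theorem corollary1 (R : realType)
  (b1 b2 g r1 r2 sg1 sg2 umax a1 a2 a3 T s0 e0 i0 j0 : R)
  (hb1 : 0 < b1) (hb2 : 0 < b2) (hg : 0 < g) (hr1 : 0 < r1) (hr2 : 0 < r2)
  (hsg1 : 0 < sg1) (hsg2 : 0 < sg2) (hsg : sg1 + sg2 = 1)
  (humax0 : 0 <= umax) (humax1 : umax < 1)
  (ha1 : 0 <= a1) (ha2 : 0 <= a2) (ha3 : 0 < a3) (hT : 0 < T)
  (hs0 : 0 < s0) (he0 : 0 < e0) (hi0 : 0 < i0) (hj0 : 0 < j0)
  (hsum0 : s0 + e0 + i0 + j0 <= 1)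
  (u s e i j p1 p2 p3 p4 : R -> R)
  (* u is an optimal control of OCP-1 with optimal trajectory (s,e,i,j) *)
  (hadm : admissible T umax u)
  (hstate : state_sol b1 b2 g r1 r2 sg1 sg2 T s0 e0 i0 j0 u s e i j)
  (hopt : forall (v sv ev iv jv : R -> R), admissible T umax v ->
      state_sol b1 b2 g r1 r2 sg1 sg2 T s0 e0 i0 j0 v sv ev iv jv ->
      (Qcost a1 a2 a3 T u e i j <= Qcost a1 a2 a3 T v ev iv jv)%E)
  (* psi = (p1,...,p4) is the adjoint function of the maximum principle *)
  (hadj : adjoint_sol b1 b2 g r1 r2 sg1 sg2 a1 a2 T u s i j p1 p2 p3 p4)
  (hnontriv : exists t, 0 <= t <= T /\
      (p1 t != 0 \/ p2 t != 0 \/ p3 t != 0 \/ p4 t != 0))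
  (hmaxae : {ae @lebesgue_measure R, forall t, 0 <= t <= T ->
      maximizes_H b1 b2 g r1 r2 sg1 sg2 a2 a3 umax
        (s t) (e t) (i t) (j t) (p1 t) (p2 t) (p3 t) (p4 t) (u t)})
  (t : R) (ht : 0 <= t <= T)
  (hmax : maximizes_H b1 b2 g r1 r2 sg1 sg2 a2 a3 umax
        (s t) (e t) (i t) (j t) (p1 t) (p2 t) (p3 t) (p4 t) (u t)) :
  let A := Astar b1 a3 (s t) (i t) (p1 t) (p2 t) in
  let lam := lambda_star b1 b2 a3 (s t) (i t) (j t) (p1 t) (p2 t) in
  (0 < A ->
     [/\ umax < lam -> u t = umax,
         0 <= lam <= umax -> u t = lam &
         lam <= 0 -> u t = 0])
  /\ (A <= 0 -> u t = 0).
Proof.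
move=> A lam.
have [hS [_ [hI hJ]]] := @state_pos R b1 b2 g r1 r2 sg1 sg2 T s0 e0 i0 j0 umax
  u s e i j hb1 hb2 hg hr1 hr2 hsg1 hsg2 humax1 hT
  hs0 he0 hi0 hj0 hadm hstate t ht.
exact: (@ctrl_cases R b1 b2 g r1 r2 sg1 sg2 a2 a3 umax (s t) (e t) (i t) (j t)
  (p1 t) (p2 t) (p3 t) (p4 t) (u t) hb1 hb2 ha3 humax1 hS hI hJ hmax).
Qed.
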